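(* Let $\mathsf{H}^\ast$ be a clique coverage of $\mathrm{G}$ with $|\mathsf{H}^\ast|=d$, let $(\mathrm{Q}_1,\dots,\mathrm{Q}_d)$ be an ordering of $\mathsf{H}^\ast$ in which every clique appears exactly once, and let $\mathbf{M}_{\mathrm{C}}$, $\mathrm{C}\in\mathsf{H}^\ast$, be clique-gossip matrices with arbitrary blocks. If the generalized line graph $\mathcal{L}(\mathsf{H}^\ast)$ contains no cycle, then for every permutation $\pi$ of $\{1,\dots,d\}$ the matrices $\mathbf{F}=\mathbf{M}_{\mathrm{Q}_d}\cdots\mathbf{M}_{\mathrm{Q}_1}$ and $\mathbf{F}_\pi=\mathbf{M}_{\mathrm{Q}_{\pi(d)}}\cdots\mathbf{M}_{\mathrm{Q}_{\pi(1)}}$ have the same characteristic polynomial.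
   Context: $\mathrm{G}=(\mathrm{V},\mathrm{E})$ is a simple undirected graph with $\mathrm{V}=\{1,\dots,n\}$; $\mathrm{G}[\mathrm{S}]$ is the induced subgraph on $\mathrm{S}\subset\mathrm{V}$. A clique is a subset $\mathrm{C}\subset\mathrm{V}$ with $\mathrm{G}[\mathrm{C}]$ complete. A clique coverage of $\mathrm{G}$ is a finite set $\mathsf{H}^\ast$ of cliques whose union is $\mathrm{V}$ and whose union graph $\bigcup_{\mathrm{C}\in\mathsf{H}^\ast}\mathrm{G}[\mathrm{C}]$ is connected. The generalized line graph $\mathcal{L}(\mathsf{H}^\ast)$ has vertex set $\mathsf{H}^\ast$, with distinct $\mathrm{C},\mathrm{C}'$ joined iff $\mathrm{C}\cap\mathrm{C}'\neq\emptyset$; cycles are meant in the usual graph-theoretic sense. Fix $b\ge1$. A clique-gossip matrix for a clique $\mathrm{C}$ is a block matrix $\mathbf{M}_{\mathrm{C}}\in\mathbb{R}^{nb\times nb}$ with $b\times b$ blocks, whose $(i,j)$ block equals an arbitrary matrix $\mathbf{A}_{ij}(\mathrm{C})\in\mathbb{R}^{b\times b}$ when $i,j\in\mathrm{C}$, equals $\mathbf{I}_b$ when $i=j\notin\mathrm{C}$, and equals $\mathbf{0}_b$ otherwise. *)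

(* Defs.v *)
From HB Require Import structures.
From mathcomp Require Import all_boot all_order all_algebra all_fingroup.
Set Implicit Arguments. Unset Strict Implicit. Unset Printing Implicit Defensive.
Import Order.TTheory GRing.Theory Num.Theory.
Local Open Scope ring_scope.

(* Graph G = (V,E) with V = 'I_n, E given by a symmetric irreflexive relation e. *)

Definition is_clique (n : nat) (e : rel 'I_n) (C : {set 'I_n}) : Prop :=
  forall i j, i \in C -> j \in C -> i != j -> e i j.

Definition union_rel (n : nat) (H : {set {set 'I_n}}) : rel 'I_n :=
  fun i j => (i != j) && [exists C in H, (i \in C) && (j \in C)].

Definition clique_coverage (n : nat) (e : rel 'I_n) (H : {set {set 'I_n}}) : Prop :=
  [/\ forall C, C \in H -> is_clique e C,
      \bigcup_(C in H) C = [set: 'I_n]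
    & forall i j : 'I_n, connect (union_rel H) i j].

Definition lg_adj (n : nat) (C C' : {set 'I_n}) : bool :=
  (C != C') && (C :&: C' != set0).

Definition line_graph_acyclic (n : nat) (H : {set {set 'I_n}}) : Prop :=
  ~ exists p : seq {set 'I_n},
      [/\ all (fun C => C \in H) p, uniq p, (3 <= size p)%N & path.cycle (@lg_adj n) p].

Lemma sum_const_nb (n b : nat) : (\sum_(i < n) b)%N = (n * b)%N.
Proof. by rewrite sum_nat_const card_ord. Qed.

Definition gossip_mx (R : pzRingType) (n b : nat)
  (A : {set 'I_n} -> 'I_n -> 'I_n -> 'M[R]_b) (C : {set 'I_n}) : 'M[R]_(n * b) :=
  castmx (sum_const_nb n b, sum_const_nb n b)
    (\mxblock_(i < n, j < n)
       (if (i \in C) && (j \in C) then A C i j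
        else if i == j then (1%:M : 'M[R]_b) else 0)).

(* Ordered product M_{s_k} ... M_{s_1} for s = [:: s_1; ...; s_k]. *)
Definition ordered_prod (R : pzRingType) (m : nat) (I : Type)
  (M : I -> 'M[R]_m) (s : seq I) : 'M[R]_m :=
  foldl (fun acc i => M i *m acc) 1%:M s.

(* Main.v *)
Require Import Defs.
From HB Require Import structures.
From mathcomp Require Import all_boot all_order all_algebra all_fingroup.
Import Order.TTheory GRing.Theory Num.Theory.
Local Open Scope ring_scope.

Lemma det_sylv (S : idomainType) m (x : S) (A B : 'M[S]_m) : x != 0 ->
  \det (x%:M - A *m B) = \det (x%:M - B *m A).
Proof.
move=> x0.
pose P := block_mx (x%:M : 'M_m) A B 1%:M.
pose L := block_mx (1%:M : 'M_m) 0 (- B) (x%:M).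
have e1 : L *m P = block_mx (x%:M) A 0 (x%:M - B *m A).
  rewrite /L /P mulmx_block !mul1mx !mul0mx !addr0 mulmx1 mulNmx.
  by rewrite mul_mx_scalar mul_scalar_mx addNr addrC mulNmx.
have e2 : P *m L = block_mx (x%:M - A *m B) (x *: A) 0 (x%:M).
  rewrite /L /P mulmx_block !mulmx1 !mulmx0 !add0r mulmxN.
  by rewrite mul_mx_scalar mul_scalar_mx scale1r subrr mul1mx.
have dL : \det L = x ^+ m by rewrite det_lblock det1 det_scalar mul1r.
have hx : x ^+ m != 0 by rewrite expf_neq0.
have := congr1 determinant e1; rewrite det_mulmx det_ublock dL det_scalar => E1.
have := congr1 determinant e2; rewrite det_mulmx det_ublock dL det_scalar => E2.
apply: (mulIf hx); rewrite -E2 mulrC E1 mulrC //.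
Qed.

Lemma char_polyC_mul (R : idomainType) m (A B : 'M[R]_m) :
  char_poly (A *m B) = char_poly (B *m A).
Proof.
rewrite /char_poly /char_poly_mx !map_mxM; apply: det_sylv.
by rewrite polyX_eq0.
Qed.


Section Prod.
Variables (R : idomainType) (m : nat) (I : eqType).
Implicit Types (X : I -> 'M[R]_m) (s t : seq I).

Lemma foldl_prod X s (acc : 'M[R]_m) :
  foldl (fun acc i => X i *m acc) acc s = ordered_prod X s *m acc.
Proof.
elim: s acc => [|x s IH] acc /=; first by rewrite /ordered_prod /= mul1mx.
by rewrite /ordered_prod /= IH [in RHS]IH mulmx1 mulmxA.
Qed.

Lemma prod_cat X s t : ordered_prod X (s ++ t) = ordered_prod X t *m ordered_prod X s.
Proof. by rewrite {1}/ordered_prod foldl_cat foldl_prod. Qed.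

Lemma prod_cons X x s : ordered_prod X (x :: s) = ordered_prod X s *m X x.
Proof. by rewrite -cat1s prod_cat /ordered_prod /= mulmx1. Qed.

Lemma prod_nil X : ordered_prod X [::] = 1%:M.
Proof. by []. Qed.

Lemma comm_prod X (Y : 'M[R]_m) s :
  (forall j, j \in s -> Y *m X j = X j *m Y) ->
  Y *m ordered_prod X s = ordered_prod X s *m Y.
Proof.
elim: s => [|x s IH] H; first by rewrite prod_nil mulmx1 mul1mx.
rewrite prod_cons mulmxA IH; last by move=> j js; apply: H; rewrite inE js orbT.
by rewrite -!mulmxA H ?mem_head.
Qed.

Lemma eq_prod X X' s : (forall j, j \in s -> X j = X' j) ->
  ordered_prod X s = ordered_prod X' s.
Proof.
elim: s => [|x s IH] H //; rewrite !prod_cons IH ?H ?mem_head //.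
by move=> j js; apply: H; rewrite inE js orbT.
Qed.

Lemma rem_mid (v : I) a b : v \notin a -> rem v (a ++ v :: b) = a ++ b.
Proof.
elim: a => [|x a IH] /=; first by rewrite eqxx.
by rewrite inE negb_or => /andP [xv va]; rewrite eq_sym (negbTE xv) IH.
Qed.

Lemma slide X (u v : I) s : uniq s -> u \in s -> v \in s -> u != v ->
  (forall j, j \in s -> j != u -> j != v -> X v *m X j = X j *m X v) ->
  char_poly (ordered_prod X s) =
  char_poly (ordered_prod (fun i => if i == u then X u *m X v else X i) (rem v s)).
Proof.
move=> us us_ vs nuv Hc.
set X' := fun i => _.
have X'E : forall r, u \notin r -> ordered_prod X' r = ordered_prod X r.
  move=> r ur; apply: eq_prod => j jr; rewrite /X'.
  by case: eqP => // E; rewrite -E jr in ur.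
have X'u : X' u = X u *m X v by rewrite /X' eqxx.
case/splitPr: vs us us_ Hc => a b.
rewrite cat_uniq /= => /and3P [Ua]; rewrite negb_or => /andP [va hab] /andP [vb Ub].
rewrite rem_mid // mem_cat inE (negbTE nuv) /= -mem_cat => uab Hc.
have Hcr : forall r, {subset r <= a ++ b} -> u \notin r ->
    X v *m ordered_prod X r = ordered_prod X r *m X v.
  move=> r sr ur; apply: comm_prod => j jr; apply: Hc.
  - by move: (sr j jr); rewrite !mem_cat inE => /orP [->|->] //; rewrite !orbT.
  - by apply: contraNneq ur => <-.
  - apply: contraNneq (_ : v \notin a ++ b) => [E|]; first by rewrite -E sr.
    by rewrite mem_cat negb_or va.
move: uab; rewrite mem_cat => /orP [uA|uB].
- case/splitPr: uA Ua va hab Hc Hcr => a1 a2.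
  move=> Ua' va' hab' Hc' Hcr'.
  move: (Ua'); rewrite cat_uniq /= => /and3P [_]; rewrite negb_or => /andP [ua1 _] /andP [ua2 _].
  have ub : u \notin b.
    apply/negP => ub; move/hasPn: hab' => /(_ u ub).
    by rewrite mem_cat mem_head orbT.
  rewrite !prod_cat !prod_cons !X'E // X'u.
  have C1 := Hcr' a1 (fun j j1 => ltac:(by rewrite !mem_cat j1)) ua1.
  have C2 := Hcr' b (fun j j1 => ltac:(by rewrite !mem_cat j1 orbT)) ub.
  set W := (_ *m X u *m _).
  have -> : ordered_prod X b *m X v *m W = X v *m (ordered_prod X b *m W) by rewrite -C2 -(mulmxA (X v)).
  rewrite char_polyC_mul /W -!mulmxA -C1 //.
- case/splitPr: uB vb Ub hab Hc Hcr => b1 b2.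
  move=> vb' Ub' hab' Hc' Hcr'.
  move: (Ub'); rewrite cat_uniq /= => /and3P [_]; rewrite negb_or => /andP [ub1 _] /andP [ub2 _].
  have uA : u \notin a.
    apply/negP => uA; move/hasPn: hab' => /(_ u) /=.
    by rewrite mem_cat mem_head orbT uA => /(_ isT).
  rewrite !prod_cat !prod_cons !prod_cat !prod_cons !X'E // X'u.
  have C1 := Hcr' b1 (fun j j1 => ltac:(by rewrite !mem_cat j1 orbT)) ub1.
  by congr char_poly; rewrite -!mulmxA (mulmxA (X v)) C1 -mulmxA.
Qed.
End Prod.


Section Graph.
Variables (I : eqType) (adj : rel I).
Hypothesis adj_sym : symmetric adj.

Definition acyc (s : seq I) : Prop :=
  ~ exists p : seq I, [/\ all (fun x => x \in s) p, uniq p, (3 <= size p)%N & path.cycle adj p].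

Definition Leaf (s : seq I) : Prop := exists v u,
  [/\ v \in s, u \in s, u != v & forall j, j \in s -> j != u -> j != v -> ~~ adj v j].

Definition valid (s : seq I) v r :=
  [/\ all (fun x => x \in s) (v :: r), uniq (v :: r) & path adj v r].

Lemma leaf_step s x y : acyc s -> x \in s -> y \in s -> x != y ->
  forall v r, valid s v r -> Leaf s \/ exists w, valid s w (v :: r).
Proof.
move=> Ac xs ys nxy v r [Al Un Pa].
case hN: (has (fun j => adj v j && (j \notin v :: r)) s).
  right; case/hasP: hN => j js /andP [avj jn]; exists j; split => //=.
  - by rewrite js.
  - by rewrite jn.
  - by rewrite adj_sym avj.
left; move/hasPn: hN => hN.
have vs : v \in s by move: Al => /= /andP [].
case: r hN Al Un Pa => [|w r'] hN Al Un Pa.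
  exists v, (if x == v then y else x); split => //.
  - by case: ifP.
  - by case: ifP => [/eqP <-|/negbT]; rewrite // eq_sym.
  move=> j js _ jv; apply/negP => avj; have := hN j js; rewrite avj /=.
  by rewrite inE (negbTE jv).
have ws : w \in s by move: Al => /= /and3P [].
exists v, w; split => //.
  by move: Un => /= /andP []; rewrite inE negb_or eq_sym => /andP [].
move=> j js jw jv; apply/negP => avj.
have jr : j \in r'.
  have := hN j js; rewrite avj /= !inE (negbTE jv) (negbTE jw) /=.
  by rewrite negbK.
apply: Ac; case/splitPr: jr Al Un Pa => r1 r2 Al Un Pa.
exists (v :: w :: rcons r1 j); split.
- apply/allP => z zc; move/allP: Al; apply.
  move: zc; rewrite !inE mem_rcons inE mem_cat inE.
  by case: (z == v) => //=; case: (z == w) => //=; case: (z == j) => //=; rewrite ?orbT // => ->.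
- move: Un; have -> : v :: w :: r1 ++ j :: r2 = (v :: w :: rcons r1 j) ++ r2.
    by rewrite -cats1 /= -catA.
  by rewrite cat_uniq => /andP [].
- by rewrite /= size_rcons.
- rewrite /path.cycle rcons_path /= last_rcons [adj j v]adj_sym avj andbT.
  move: Pa => /= /andP [-> Pa]; rewrite /=.
  move: Pa; rewrite cat_path => /andP [P1 P2].
  by rewrite rcons_path P1 /=; move: P2 => /= /andP [-> _].
Qed.

Lemma leaf_exists s x y : acyc s -> x \in s -> y \in s -> x != y -> Leaf s.
Proof.
move=> Ac xs ys nxy.
have H : forall k, Leaf s \/ exists v r, valid s v r /\ size r = k.
  elim=> [|k [L|[v [r [V E]]]]]; [right; exists x, [::]; split => //|by left|].
    by split => //=; rewrite xs.
  case: (@leaf_step s x y Ac xs ys nxy v r V) => [L|[w V']]; first by left.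
  by right; exists w, (v :: r); rewrite /= E.
case: (H (size s)) => [//|[v [r [[Al Un _] E]]]].
have := uniq_leq_size Un (fun z zi => (allP Al) z zi).
by rewrite /= E ltnn.
Qed.
End Graph.


Section Main.
Variables (R : idomainType) (m : nat) (I : eqType) (adj : rel I).
Hypothesis adj_sym : symmetric adj.

Definition comm_on (X : I -> 'M[R]_m) (s : seq I) := forall i j, i \in s -> j \in s -> i != j ->
  ~~ adj i j -> X i *m X j = X j *m X i.

Lemma main_ind k : forall s t (X : I -> 'M[R]_m), size s = k -> uniq s -> perm_eq s t ->
  comm_on X s -> @acyc I adj s -> char_poly (ordered_prod X s) = char_poly (ordered_prod X t).
Proof.
elim: k => [|k IH] s t X Es Us Pst Cm Ac.
  by move/size0nil: Es Pst => -> /perm_size /esym /size0nil ->.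
case: s Es Us Pst Cm Ac => [//|x [|y s']] Es Us Pst Cm Ac.
  by rewrite (perm_small_eq _ Pst) // -(perm_size Pst).
set s := x :: y :: s' in Es Us Pst Cm Ac *.
have xs : x \in s by rewrite mem_head.
have ys : y \in s by rewrite !inE eqxx orbT.
have nxy : x != y by move: Us => /= /andP []; rewrite inE negb_or => /andP [].
have [v [u [vs us nuv Lf]]] := @leaf_exists I adj adj_sym s x y Ac xs ys nxy.
have Cv : forall j, j \in s -> j != u -> j != v -> X v *m X j = X j *m X v.
  by move=> j js ju jv; apply: Cm => //; [rewrite eq_sym | apply: Lf].
have memt : forall j, (j \in t) = (j \in s) by move=> j; rewrite (perm_mem Pst).
have Ut : uniq t by rewrite -(perm_uniq Pst).
rewrite (@slide R m I X u v s Us us vs nuv Cv).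
rewrite (@slide R m I X u v t Ut (_ : u \in t) (_ : v \in t) nuv) ?memt //; last first.
  by move=> j; rewrite memt; apply: Cv.
set X' := fun i => _.
apply: IH.
- by rewrite size_rem // Es.
- exact: rem_uniq.
- have := perm_to_rem vs; have := perm_to_rem (_ : v \in t); rewrite memt => /(_ vs) Pt Ps.
  rewrite perm_sym in Ps; rewrite -(perm_cons v); exact: perm_trans Ps (perm_trans Pst Pt).
- move=> i j; rewrite !(mem_rem_uniq _ Us) !inE => /andP [iv iS] /andP [jv jS] nij aij.
  rewrite /X'.
  have Cuv : forall w, w \in s -> w != u -> w != v -> ~~ adj u w ->
      X u *m X v *m X w = X w *m (X u *m X v).
    move=> w ws wu wv auw.
    rewrite -mulmxA Cv // mulmxA Cm // -?mulmxA // eq_sym //.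
  case: eqP => [Ei|/eqP niu]; case: eqP => [Ej|/eqP nju].
  + by rewrite Ei Ej eqxx in nij.
  + by rewrite Cuv // -?Ei.
  + by rewrite (Cuv i) // -?Ej // adj_sym.
  + exact: Cm.
- move=> [p [Al Up Sp Cp]]; apply: Ac; exists p; split => //.
  by apply/allP => z /(allP Al) /mem_rem.
Qed.
End Main.


Lemma castmx_mul (R : pzRingType) m1 m2 (e : m1 = m2) (A B : 'M[R]_m1) :
  castmx (e, e) A *m castmx (e, e) B = castmx (e, e) (A *m B).
Proof. by case: m2 / e. Qed.

Section Gossip.
Variables (R : pzRingType) (n b : nat) (A : {set 'I_n} -> 'I_n -> 'I_n -> 'M[R]_b).
Implicit Types (C : {set 'I_n}) (i j k : 'I_n).

Definition gf (C : {set 'I_n}) (i j : 'I_n) : 'M[R]_b :=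
  if (i \in C) && (j \in C) then A C i j else if i == j then (1%:M : 'M[R]_b) else 0.

Lemma gf_out C i j : i \notin C -> gf C i j = if i == j then 1%:M else 0.
Proof. by rewrite /gf => /negbTE ->. Qed.

Lemma gf_outr C i j : j \notin C -> gf C i j = if i == j then 1%:M else 0.
Proof. by rewrite /gf => /negbTE ->; rewrite andbF. Qed.

Lemma sumL C i (Z : 'I_n -> 'M[R]_b) : i \notin C -> \sum_j gf C i j *m Z j = Z i.
Proof.
move=> iC; rewrite (bigD1 i) //= big1 ?addr0 ?gf_out ?eqxx ?mul1mx //.
by move=> j ji; rewrite gf_out // eq_sym (negbTE ji) mul0mx.
Qed.

Lemma sumR C k (Z : 'I_n -> 'M[R]_b) : k \notin C -> \sum_j Z j *m gf C j k = Z k.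
Proof.
move=> kC; rewrite (bigD1 k) //= big1 ?addr0 ?gf_outr ?eqxx ?mulmx1 //.
by move=> j jk; rewrite gf_outr // (negbTE jk) mulmx0.
Qed.

Lemma half C C' i k : C :&: C' = set0 -> i \notin C' ->
  \sum_j gf C i j *m gf C' j k = \sum_j gf C' i j *m gf C j k.
Proof.
move=> E iC'.
have D x : x \in C -> x \notin C'.
  move=> xC; apply/negP => xC'; have : x \in C :&: C' by rewrite inE xC xC'.
  by rewrite E inE.
rewrite (sumL C' i (fun j => gf C j k) iC').
case iC: (i \in C); last first.
  by rewrite (sumL C i (fun j => gf C' j k)) ?iC // !gf_out ?iC.
case kC': (k \in C'); last by rewrite sumR ?kC'.
have kC : k \notin C.
  by apply/negP => kC; move: (D k kC); rewrite kC'.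
rewrite big1; last first.
  move=> j _; case jC: (j \in C).
    rewrite (gf_out C' j k (D j jC)); case: eqP => [Ejk|]; last by rewrite mulmx0.
    by rewrite -Ejk jC in kC.
  rewrite gf_outr ?jC //; case: eqP => [Eij|]; last by rewrite mul0mx.
  by rewrite Eij jC in iC.
rewrite gf_outr //; case: eqP => // Eik.
by rewrite -Eik iC in kC.
Qed.

Lemma gossip_comm C C' : C :&: C' = set0 ->
  gossip_mx A C *m gossip_mx A C' = gossip_mx A C' *m gossip_mx A C.
Proof.
move=> E; rewrite /gossip_mx !castmx_mul !mul_mxblock; congr castmx.
apply/eq_mxblock => i k.
change (\sum_j gf C i j *m gf C' j k = \sum_j gf C' i j *m gf C j k).
case iC': (i \in C'). 2: by apply: half; rewrite ?iC'.
have iC : i \notin C.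
  apply/negP => iC; have : i \in C :&: C' by rewrite inE iC iC'.
  by rewrite E inE.
by symmetry; apply: half; rewrite // setIC.
Qed.
End Gossip.


Theorem corollary1 (R : realFieldType) (n b d : nat) (e : rel 'I_n)
  (e_sym : symmetric e) (e_irr : irreflexive e)
  (H : {set {set 'I_n}}) (HH : clique_coverage e H) (Hd : #|H| = d)
  (Q : 'I_d -> {set 'I_n}) (Q_inj : injective Q) (QH : [set Q i | i : 'I_d] = H)
  (A : {set 'I_n} -> 'I_n -> 'I_n -> 'M[R]_b)
  (Hacyc : line_graph_acyclic H) (pi : 'S_d) :
  char_poly (ordered_prod (fun i => gossip_mx A (Q i)) (enum 'I_d)) =
  char_poly (ordered_prod (fun i => gossip_mx A (Q i)) [seq pi i | i <- enum 'I_d]).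
Proof.
pose adj : rel 'I_d := fun i j => lg_adj (Q i) (Q j).
have adj_sym : symmetric adj by move=> i j; rewrite /adj /lg_adj eq_sym setIC.
apply: (@main_ind R (n * b) 'I_d adj adj_sym d).
- by rewrite size_enum_ord.
- exact: enum_uniq.
- apply: uniq_perm; first exact: enum_uniq.
    by rewrite map_inj_uniq ?enum_uniq //; exact: perm_inj.
  move=> i; rewrite mem_enum; symmetry; apply/mapP; exists (pi^-1 i)%g.
    by rewrite mem_enum.
  by rewrite permKV.
- move=> i j _ _ nij; rewrite /adj /lg_adj (inj_eq Q_inj) nij /= negbK => /eqP E.
  exact: gossip_comm.
- move=> [p [Al Up Sp Cp]]; apply: Hacyc; exists (map Q p); split.
  + by apply/allP => C /mapP [i _ ->]; rewrite -QH; apply: imset_f.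
  + by rewrite map_inj_uniq.
  + by rewrite size_map.
  + by rewrite cycle_map.
Qed.
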